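(* For all $N\in\mathbb{Z}_{\geqslant 1}$, $$\prod_{n=1}^N n!\leqslant N^{\frac12(N+1)^2}e^{-\frac34(N^2-1)}.$$ *)

(* Defs.v *)
From Stdlib Require Import Arith Reals Lra Lia.
Open Scope R_scope.

Fixpoint superfact (N : nat) : R :=
  match N with
  | O => 1
  | S m => superfact m * INR (fact (S m))
  end.

(* Main.v *)
Require Import Defs.
From Stdlib Require Import Reals.
From Stdlib Require Import Arith Lra Lia.
From Coquelicot Require Import Coquelicot.
Open Scope R_scope.

Lemma lnA (x : R) : 0 < x -> 2 * x / (2 + x) <= ln (1 + x).
Proof.
  intros Hx.
  pose (f := fun t => ln (1 + t) - 2 * t / (2 + t)).
  pose (f' := fun t => / (1 + t) - 4 / ((2 + t) * (2 + t))).
  destruct (MVT_cor2 f f' 0 x Hx) as [c [Hc1 Hc2]].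
  { intros c Hc. apply is_derive_Reals. unfold f, f'.
    auto_derive.
    - lra.
    - field. lra. }
  assert (Hf0 : f 0 = 0).
  { unfold f. rewrite Rplus_0_r, ln_1. field. }
  assert (Hd : 0 <= f' c).
  { unfold f'.
    assert (E : / (1 + c) - 4 / ((2 + c) * (2 + c)) = c * c / ((1 + c) * ((2 + c) * (2 + c)))) by (field; lra).
    rewrite E. apply Rmult_le_pos. nra. apply Rlt_le, Rinv_0_lt_compat. apply Rmult_lt_0_compat; nra. }
  assert (0 <= f x) by nra.
  unfold f in H. lra.
Qed.

Lemma lnB (x : R) : 0 < x < 1 -> ln (1 - x) <= - x - x * x / 2.
Proof.
  intros Hx.
  pose (f := fun t => ln (1 - t) + t + t * t / 2).
  pose (f' := fun t => - / (1 - t) + 1 + t).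
  destruct (MVT_cor2 f f' 0 x (proj1 Hx)) as [c [Hc1 Hc2]].
  { intros c Hc. apply is_derive_Reals. unfold f, f'.
    auto_derive.
    - lra.
    - field. lra. }
  assert (Hf0 : f 0 = 0).
  { unfold f. rewrite Rminus_0_r, ln_1. field. }
  assert (Hd : f' c <= 0).
  { unfold f'.
    assert (E : - / (1 - c) + 1 + c = - (c * c / (1 - c))) by (field; lra).
    rewrite E. assert (0 <= c * c / (1 - c)); [|lra].
    apply Rmult_le_pos. nra. apply Rlt_le, Rinv_0_lt_compat. lra. }
  assert (f x <= 0) by nra.
  unfold f in H. lra.
Qed.

Lemma lnfact (m : nat) : (1 <= m)%nat ->
  ln (INR (fact m)) <= 1 + (INR m + 1/2) * ln (INR m) - INR m.
Proof.
  intros Hm. induction Hm as [|m Hm IH].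
  - simpl. rewrite ln_1. lra.
  - assert (Hm0 : 1 <= INR m) by (apply (le_INR 1); exact Hm).
    rewrite fact_simpl, mult_INR, ln_mult; [| apply lt_0_INR; lia | apply INR_fact_lt_0].
    rewrite S_INR.
    assert (Hl : 2 * (/ INR m) / (2 + / INR m) <= ln (1 + / INR m)).
    { apply lnA. apply Rinv_0_lt_compat. lra. }
    assert (E1 : 1 + / INR m = (INR m + 1) / INR m) by (field; lra).
    assert (E2 : 2 * (/ INR m) / (2 + / INR m) = 2 / (2 * INR m + 1)) by (field; lra).
    rewrite E1, E2 in Hl. unfold Rdiv at 2 in Hl.
    rewrite ln_mult, ln_Rinv in Hl by (try apply Rinv_0_lt_compat; lra).
    assert (Hk : (INR m + 1/2) * (2 / (2 * INR m + 1)) = 1) by (field; lra).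
    assert (1 <= (INR m + 1/2) * (ln (INR m + 1) - ln (INR m))).
    { apply Rle_trans with ((INR m + 1/2) * (2 / (2 * INR m + 1))); [lra|]. apply Rmult_le_compat_l; lra. }
    lra.
Qed.

Lemma sf_pos (N : nat) : 0 < superfact N.
Proof.
  induction N. simpl; lra. change (superfact (S N)) with (superfact N * INR (fact (S N))). apply Rmult_lt_0_compat. exact IHN. apply INR_fact_lt_0.
Qed.

Lemma lnsf (N : nat) : (1 <= N)%nat ->
  ln (superfact N) <= (1/2) * (INR N + 1) ^ 2 * ln (INR N) - (3/4) * (INR N ^ 2 - 1).
Proof.
  intros HN. induction HN as [|N HN IH].
  - simpl. rewrite Rmult_1_l, ln_1. lra.
  - assert (H1 : 1 <= INR N) by (apply (le_INR 1); exact HN).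
    change (superfact (S N)) with (superfact N * INR (fact (S N))).
    rewrite ln_mult by (apply sf_pos || apply INR_fact_lt_0).
    pose proof (lnfact (S N) ltac:(lia)) as HF.
    rewrite S_INR in *.
    assert (HB : ln (1 - / (INR N + 1)) <= - / (INR N + 1) - / (INR N + 1) * / (INR N + 1) / 2).
    { apply lnB. split. apply Rinv_0_lt_compat; lra.
      rewrite <- Rinv_1. apply Rinv_lt_contravar; lra. }
    assert (E : 1 - / (INR N + 1) = INR N * / (INR N + 1)) by (field; lra).
    rewrite E, ln_mult, ln_Rinv in HB by (try apply Rinv_0_lt_compat; lra).
    set (a := ln (INR N)) in *. set (b := ln (INR N + 1)) in *.
    assert (HM : (1/2) * (INR N + 1) ^ 2 * (a - b) <=
                 (1/2) * (INR N + 1) ^ 2 * (- / (INR N + 1) - / (INR N + 1) * / (INR N + 1) / 2)).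
    { apply Rmult_le_compat_l. nra. lra. }
    assert (E2 : (1/2) * (INR N + 1) ^ 2 * (- / (INR N + 1) - / (INR N + 1) * / (INR N + 1) / 2)
                 = - (INR N + 1) / 2 - 1/4) by (field; lra).
    rewrite E2 in HM.
    assert (E3 : (1/2) * (INR N + 1 + 1) ^ 2 * b = (1/2) * (INR N + 1) ^ 2 * b + (INR N + 1 + 1/2) * b) by field.
    rewrite E3.
    assert (E4 : (1/2) * (INR N + 1) ^ 2 * (a - b) = (1/2) * (INR N + 1) ^ 2 * a - (1/2) * (INR N + 1) ^ 2 * b) by ring.
    rewrite E4 in HM.
    nra.
Qed.

Theorem lemma4 (N : nat) (hN : (1 <= N)%nat) :
  superfact N <=
  Rpower (INR N) ((1/2) * (INR N + 1) ^ 2) * exp (- (3/4) * (INR N ^ 2 - 1)).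
Proof.
  unfold Rpower. rewrite <- exp_plus.
  rewrite <- (exp_ln (superfact N)) by apply sf_pos.
  pose proof (lnsf N hN) as H. match goal with |- exp ?u <= exp ?v => destruct (Rle_lt_or_eq_dec u v) as [Hl|He]; [lra| apply Rlt_le, exp_increasing, Hl | rewrite He; apply Rle_refl] end.
Qed.
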